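(* Let $K$ be a Barański sponge in $\mathbb R^d$ and let $\mathbf w,\mathbf w'\in\mathcal D^*$ with $|\mathbf w|=|\mathbf w'|$ be such that $\pi(\mathbf w)-\pi(\mathbf w')$ is a nonzero $0$-$\pm1$ vector. Then $\psi_{\mathbf w}(K)\cap\psi_{\mathbf w'}(K)\ne\varnothing$ if and only if $\pi(\mathbf w)-\pi(\mathbf w')\in\mathcal E_{\,d-|\pi(\mathbf w)-\pi(\mathbf w')|}$.
   Context: Let $d\ge2$, integers $N_1,\dots,N_d\ge2$, probability vectors $(p_{i,1},\dots,p_{i,N_i})$ (positive entries summing to 1), $q_{i,1}=0$, $q_{i,j}=\sum_{\ell<j}p_{i,\ell}$. Let $\mathcal D\subset\{(j_1,\dots,j_d):1\le j_i\le N_i\}$ with $1<|\mathcal D|<\prod_iN_i$; for $w=(j_1,\dots,j_d)\in\mathcal D$, $\psi_w(x_1,\dots,x_d)=(p_{1,j_1}x_1+q_{1,j_1},\dots,p_{d,j_d}x_d+q_{d,j_d})$; $K$ is the unique nonempty compact set with $K=\bigcup_{w\in\mathcal D}\psi_w(K)$. $\mathcal D^*$ is the set of nonempty finite words over $\mathcal D$, $|\mathbf w|$ the length, and $\psi_{w_1\cdots w_k}=\psi_{w_1}\circ\cdots\circ\psi_{w_k}$. Define $\pi_i:\mathcal D^*\to\mathbb Z_{\ge0}$ by $\pi_i((j_1,\dots,j_d))=j_i$ and $\pi_i(\mathbf w w)=N_i\pi_i(\mathbf w)+\pi_i(w)$ for $\mathbf w\in\mathcal D^*,w\in\mathcal D$;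 $\pi(\mathbf w)=(\pi_1(\mathbf w),\dots,\pi_d(\mathbf w))$. A $0$-$\pm1$ vector is $\alpha\in\mathbb Z^d$ with all $|\alpha_i|\le1$, and $|\alpha|=\sum_i|\alpha_i|$. $\mathcal E_0$ is the set of nonzero $0$-$\pm1$ vectors $\alpha$ with $((N_1-1)\alpha_1,\dots,(N_d-1)\alpha_d)\in\mathcal D-\mathcal D$; for $1\le t\le d-1$, $\mathcal E_t$ is the set of nonzero $0$-$\pm1$ vectors $\alpha$ for which there is $e\in\mathcal D-\mathcal D$ with $(N_1\alpha_1,\dots,N_d\alpha_d)+e\in\bigcup_{k=0}^{t-1}\mathcal E_k$. Here $\mathcal D-\mathcal D=\{u-v:u,v\in\mathcal D\}$. *)

(* Defs.v *)
From HB Require Import structures.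
From mathcomp Require Import all_boot all_order all_algebra.
From mathcomp Require Import all_classical all_reals all_analysis.
Set Implicit Arguments. Unset Strict Implicit. Unset Printing Implicit Defensive.
Import Order.TTheory GRing.Theory Num.Theory.
Import numFieldNormedType.Exports.
Local Open Scope ring_scope.
Local Open Scope classical_set_scope.

(* A digit w = (j_1,...,j_d) is a finite function 'I_d -> nat (digits are 1-based). *)
Definition digit (d : nat) := {ffun 'I_d -> nat}.

Definition qpos (R : realType) (d : nat) (p : 'I_d -> nat -> R) (i : 'I_d) (j : nat) : R :=
  \sum_(1 <= l < j) p i l.

Definition psi1 (R : realType) (d : nat) (p : 'I_d -> nat -> R) (w : digit d)
  (x : 'rV[R]_d) : 'rV[R]_d :=
  \row_i (p i (w i) * x ord0 i + qpos p i (w i)).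

Definition psiw (R : realType) (d : nat) (p : 'I_d -> nat -> R) (s : seq (digit d)) :
  'rV[R]_d -> 'rV[R]_d :=
  foldr (fun w f => psi1 p w \o f) id s.

Definition piw (d : nat) (N : 'I_d -> nat) (s : seq (digit d)) (i : 'I_d) : int :=
  (foldl (fun acc (w : digit d) => N i * acc + w i)%N 0%N s)%:Z.

Definition zpm1 (d : nat) (a : 'I_d -> int) : Prop := forall i, `|a i| <= 1.
Definition nonzerov (d : nat) (a : 'I_d -> int) : Prop := exists i, a i != 0.
Definition absv (d : nat) (a : 'I_d -> int) : nat := (\sum_(i < d) absz (a i))%N.

Definition inDD (d : nat) (D : seq (digit d)) (e : 'I_d -> int) : Prop :=
  exists u v, u \in D /\ v \in D /\ forall i, e i = (u i)%:Z - (v i)%:Z.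

Definition E0 (d : nat) (N : 'I_d -> nat) (D : seq (digit d)) (a : 'I_d -> int) : Prop :=
  zpm1 a /\ nonzerov a /\ inDD D (fun i => ((N i)%:Z - 1) * a i).

(* next level, given the union U of the previous levels *)
Definition Estep (d : nat) (N : 'I_d -> nat) (D : seq (digit d))
  (U : ('I_d -> int) -> Prop) (a : 'I_d -> int) : Prop :=
  zpm1 a /\ nonzerov a /\
  exists e, inDD D e /\ U (fun i => (N i)%:Z * a i + e i).

Fixpoint Ecum (d : nat) (N : 'I_d -> nat) (D : seq (digit d)) (t : nat)
  : ('I_d -> int) -> Prop :=
  match t with
  | 0 => E0 N D
  | t'.+1 => fun a => Ecum N D t' a \/ Estep N D (Ecum N D t') a
  end.

Definition Eset (d : nat) (N : 'I_d -> nat) (D : seq (digit d)) (t : nat)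
  : ('I_d -> int) -> Prop :=
  match t with
  | 0 => E0 N D
  | t'.+1 => Estep N D (Ecum N D t')
  end.

(* Main.v *)
Require Import Defs.
From HB Require Import structures.
From mathcomp Require Import all_boot all_order all_algebra.
From mathcomp Require Import all_classical all_reals all_analysis.
From mathcomp Require Import zify ring lra.
Import Order.TTheory GRing.Theory Num.Theory.
Import numFieldNormedType.Exports.
Local Open Scope ring_scope.
Local Open Scope classical_set_scope.

Lemma int3_ (x : int) : `|x| <= 1 -> x = -1 \/ x = 0 \/ x = 1.
Proof. move=> h. lia. Qed.

Lemma natA (N a b w w' : nat) : (1 <= w <= N)%N -> (1 <= w' <= N)%N ->
  (N * a + w = N * b + w')%N -> a = b /\ w = w'.
Proof. move=> h1 h2 e. have [ab|ab|ab] := ltngtP a b.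
- have : (N * a.+1 <= N * b)%N by rewrite leq_mul2l ab orbT. lia.
- have : (N * b.+1 <= N * a)%N by rewrite leq_mul2l ab orbT. lia.
- subst; lia.
Qed.

Lemma natB (N a b w w' : nat) : (1 <= w <= N)%N -> (1 <= w' <= N)%N ->
  (N * a + w = (N * b + w').+1)%N -> (a = b /\ w = w'.+1) \/ (a = b.+1 /\ w = 1 /\ w' = N)%N.
Proof. move=> h1 h2 e. have [ab|ab|ab] := ltngtP a b.
- have : (N * a.+1 <= N * b)%N by rewrite leq_mul2l ab orbT. lia.
- have [ab1|ab1] := eqVneq a b.+1.
  + subst; right. rewrite mulnS in e. lia.
  + have : (N * b.+2 <= N * a)%N by rewrite leq_mul2l orbC ltn_neqAle eq_sym ab1 ab. lia.
- subst; left; lia.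
Qed.

Definition Qs {R : realType} (P : nat -> R) (j : nat) : R := \sum_(1 <= l < j) P l.

Lemma Q1 {R : realType} (P : nat -> R) : Qs P 1 = 0.
Proof. by rewrite /Qs big_geq. Qed.

Lemma QS {R : realType} (P : nat -> R) j : (0 < j)%N -> Qs P j.+1 = Qs P j + P j.
Proof. by move=> j0; rewrite /Qs big_nat_recr. Qed.

Lemma Qlt {R : realType} (P : nat -> R) (M : nat) :
  (forall j, (1 <= j <= M)%N -> 0 < P j) ->
  forall j k, (1 <= j)%N -> (j < k)%N -> (k <= M.+1)%N -> Qs P j < Qs P k.
Proof.
move=> hP j k j1; elim: k => [//|k IH] jk kM.
rewrite QS; last by lia.
have Pk : 0 < P k by apply: hP; lia.
have [->|jk'] := eqVneq j k; first by rewrite ltrDl.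
have := IH ltac:(lia) ltac:(lia). lra.
Qed.

Lemma Qle {R : realType} (P : nat -> R) (M : nat) :
  (forall j, (1 <= j <= M)%N -> 0 < P j) ->
  forall j k, (1 <= j)%N -> (j <= k)%N -> (k <= M.+1)%N -> Qs P j <= Qs P k.
Proof.
move=> hP j k j1 jk kM; have [->|jk'] := eqVneq j k; first by [].
apply/ltW; apply: (Qlt P M hP j k) => //; lia.
Qed.

Lemma int3 (x : int) : `|x| <= 1 -> x = -1 \/ x = 0 \/ x = 1.
Proof. move=> h. lia. Qed.

Lemma Qge0 {R : realType} {P : nat -> R} {M : nat} :
  (forall j, (1 <= j <= M)%N -> 0 < P j) ->
  forall j, (1 <= j <= M.+1)%N -> 0 <= Qs P j.
Proof. move=> hP j hj; rewrite -(Q1 P); apply: (Qle P M hP) => //; lia. Qed.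

Lemma Qgt0 {R : realType} {P : nat -> R} {M : nat} :
  (forall j, (1 <= j <= M)%N -> 0 < P j) ->
  forall j, (2 <= j <= M.+1)%N -> 0 < Qs P j.
Proof. move=> hP j hj; rewrite -(Q1 P); apply: (Qlt P M hP) => //; lia. Qed.

Lemma Qlt1 {R : realType} {P : nat -> R} {M : nat} :
  (forall j, (1 <= j <= M)%N -> 0 < P j) -> Qs P M.+1 = 1 ->
  forall j, (1 <= j <= M)%N -> Qs P j < 1.
Proof. move=> hP h1 j hj; rewrite -h1; apply: (Qlt P M hP) => //; lia. Qed.

Lemma QPle1 {R : realType} {P : nat -> R} {M : nat} :
  (forall j, (1 <= j <= M)%N -> 0 < P j) -> Qs P M.+1 = 1 ->
  forall j, (1 <= j <= M)%N -> Qs P j + P j <= 1.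
Proof. move=> hP h1 j hj; rewrite -QS; last by lia.
rewrite -h1; apply: (Qle P M hP) => //; lia. Qed.

Lemma Plt1 {R : realType} {P : nat -> R} {M : nat} :
  (1 < M)%N -> (forall j, (1 <= j <= M)%N -> 0 < P j) -> Qs P M.+1 = 1 ->
  forall j, (1 <= j <= M)%N -> P j < 1.
Proof. move=> hM hP h1 j hj.
have := QPle1 hP h1 j hj.
have [->|j1] := eqVneq j 1%N.
  have := Qgt0 hP 2 (_ : (2 <= 2 <= M.+1)%N); rewrite QS // Q1 => /(_ ltac:(lia)). 
  have := Qlt1 hP h1 2 (_ : (1 <= 2 <= M)%N); rewrite QS // Q1 => /(_ ltac:(lia)). lra.
have := Qgt0 hP j (_ : (2 <= j <= M.+1)%N) => /(_ ltac:(lia)). lra.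
Qed.

Ltac nlia R := repeat (match goal with H : context[R] |- _ => clear H end); lia.

Lemma coord_fwd {R : realType} {P : nat -> R} {M : nat} :
  (1 < M)%N -> (forall j, (1 <= j <= M)%N -> 0 < P j) -> Qs P M.+1 = 1 ->
  forall (a b : nat) (z z' : R) (al : int),
  (1 <= a <= M)%N -> (1 <= b <= M)%N -> 0 <= z <= 1 -> 0 <= z' <= 1 -> `|al| <= 1 ->
  P b * z' + Qs P b = P a * z + Qs P a + al%:~R ->
  let be := (M%:Z * al + (a%:Z - b%:Z))%R in
  z' = z + be%:~R /\ `|be| <= 1 /\ (al != 0 -> be = al).
Proof.
move=> hM hP h1 a b z z' al ha hb hz hz' hal e be.
have Pa := hP a ha; have Pb := hP b hb.
have Qa := Qge0 hP a ltac:(nlia R); have Qb := Qge0 hP b ltac:(nlia R).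
have QPa := QPle1 hP h1 a ha; have QPb := QPle1 hP h1 b hb.
have paz : 0 <= P a * z by apply: mulr_ge0; lra.
have pbz : 0 <= P b * z' by apply: mulr_ge0; lra.
have paz1 : P a * z <= P a by rewrite ler_piMr //; lra.
have pbz1 : P b * z' <= P b by rewrite ler_piMr //; lra.
case: (int3 al hal) => [|[]] Hal; rewrite Hal in e; rewrite /be Hal.
-
  have Qb0 : Qs P b = 0 by move: e; rewrite /= ; lra.
  have b1 : b = 1%N.
    apply/eqP; apply: contraT => hb1. have := Qgt0 hP b ltac:(nlia R). lra.
  have z'0 : z' = 0.
    have : P b * z' = 0 by move: e; rewrite /=; lra.
    move/eqP; rewrite mulf_eq0 => /orP[/eqP|/eqP] //; lra.
  have aM : a = M.
    apply/eqP; apply: contraT => haM.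
    have qs := QS P a ltac:(nlia R).
    have := Qlt1 hP h1 a.+1 ltac:(nlia R). move: e; rewrite /=; lra.
  have z1 : z = 1.
    subst a; have := QS P M ltac:(nlia R); rewrite h1; move=> qs.
    have : P M * (1 - z) = 0 by move: e; rewrite /=; lra.
    move/eqP; rewrite mulf_eq0 => /orP[/eqP|/eqP]; lra.
  subst; split; last by split; [rewrite /=; nlia R | move=> _; nlia R].
  have -> : (M%:Z * -1 + (M%:Z - 1%:Z))%R = -1 by nlia R.
  rewrite /=; lra.
-
  have e' : P b * z' + Qs P b = P a * z + Qs P a by move: e; rewrite /=; lra.
  have [ab|ab|ab] := ltngtP a b.
  + have qs := QS P a ltac:(nlia R).
    have qab := Qle P M hP a.+1 b ltac:(nlia R) ltac:(nlia R) ltac:(nlia R).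
    have ba : b = a.+1.
      apply/eqP; apply: contraT => hba.
      have := Qlt P M hP a.+1 b ltac:(nlia R) ltac:(nlia R) ltac:(nlia R).
      lra.
    subst b.
    have z1 : z = 1.
      have : P a * (1 - z) = 0 by lra.
      move/eqP; rewrite mulf_eq0 => /orP[/eqP|/eqP]; lra.
    have z'0 : z' = 0.
      have : P a.+1 * z' = 0 by lra.
      move/eqP; rewrite mulf_eq0 => /orP[/eqP|/eqP]; lra.
    split; last by split; [nlia R | rewrite eqxx].
    have -> : (M%:Z * 0 + (a%:Z - a.+1%:Z))%R = -1 by nlia R.
    rewrite /=; lra.
  + have qs := QS P b ltac:(nlia R).
    have qab := Qle P M hP b.+1 a ltac:(nlia R) ltac:(nlia R) ltac:(nlia R).
    have ba : a = b.+1.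
      apply/eqP; apply: contraT => hba.
      have := Qlt P M hP b.+1 a ltac:(nlia R) ltac:(nlia R) ltac:(nlia R).
      lra.
    subst a.
    have z1 : z' = 1.
      have : P b * (1 - z') = 0 by lra.
      move/eqP; rewrite mulf_eq0 => /orP[/eqP|/eqP]; lra.
    have z'0 : z = 0.
      have : P b.+1 * z = 0 by lra.
      move/eqP; rewrite mulf_eq0 => /orP[/eqP|/eqP]; lra.
    split; last by split; [nlia R | rewrite eqxx].
    have -> : (M%:Z * 0 + (b.+1%:Z - b%:Z))%R = 1 by nlia R.
    rewrite /=; lra.
  + subst b.
    have : P a * (z' - z) = 0 by lra.
    move/eqP; rewrite mulf_eq0 => /orP[/eqP|/eqP] hzz; first by exfalso; lra.
    split; last by split; [nlia R | rewrite eqxx].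
    have -> : (M%:Z * 0 + (a%:Z - a%:Z))%R = 0 by nlia R.
    rewrite /=; lra.
-
  have Qa0 : Qs P a = 0 by move: e; rewrite /= ; lra.
  have a1 : a = 1%N.
    apply/eqP; apply: contraT => ha1. have := Qgt0 hP a ltac:(nlia R). lra.
  have z0 : z = 0.
    have : P a * z = 0 by move: e; rewrite /=; lra.
    move/eqP; rewrite mulf_eq0 => /orP[/eqP|/eqP] //; lra.
  have bM : b = M.
    apply/eqP; apply: contraT => hbM.
    have qs := QS P b ltac:(nlia R).
    have := Qlt1 hP h1 b.+1 ltac:(nlia R). move: e; rewrite /=; lra.
  have z1 : z' = 1.
    subst b; have := QS P M ltac:(nlia R); rewrite h1; move=> qs.
    have : P M * (1 - z') = 0 by move: e; rewrite /=; lra.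
    move/eqP; rewrite mulf_eq0 => /orP[/eqP|/eqP]; lra.
  subst; split; last by split; [rewrite /=; nlia R | move=> _; nlia R].
  have -> : (M%:Z * 1 + (1%:Z - M%:Z))%R = 1 by nlia R.
  rewrite /=; lra.
Qed.

Lemma coord_bwd {R : realType} {P : nat -> R} {M : nat} :
  (1 < M)%N -> (forall j, (1 <= j <= M)%N -> 0 < P j) -> Qs P M.+1 = 1 ->
  forall (a b : nat) (z z' : R) (al : int),
  (1 <= a <= M)%N -> (1 <= b <= M)%N -> 0 <= z <= 1 -> 0 <= z' <= 1 -> `|al| <= 1 ->
  `|(M%:Z * al + (a%:Z - b%:Z))%R| <= 1 ->
  z' = z + (M%:Z * al + (a%:Z - b%:Z))%:~R ->
  P b * z' + Qs P b = P a * z + Qs P a + al%:~R.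
Proof.
move=> hM hP h1 a b z z' al ha hb hz hz' hal hbe e.
have qM := QS P M ltac:(nlia R); rewrite h1 in qM.
have q1 := Q1 P.
case: (int3 al hal) => [|[]] Hal; subst al.
- have Hb : (M%:Z * -1 + (a%:Z - b%:Z))%R = -1 by nlia R.
  have [-> ->] : a = M /\ b = 1%N by nlia R.
  rewrite Hb in e; move: e; rewrite /= => e.
  have [-> ->] : z = 1 /\ z' = 0 by lra.
  rewrite q1; lra.
- case: (int3 _ hbe) => [|[]] Hb.
  + have eb : b = a.+1 by nlia R.
    rewrite Hb in e; move: e; rewrite /= => e.
    have [-> ->] : z = 1 /\ z' = 0 by lra.
    rewrite eb (QS P a ltac:(nlia R)); rewrite /=; lra.
  + have eb : b = a by nlia R.
    rewrite Hb in e; move: e; rewrite /= eb => ->; rewrite /=; lra.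
  + have eb : a = b.+1 by nlia R.
    rewrite Hb in e; move: e; rewrite /= => e.
    have [-> ->] : z = 0 /\ z' = 1 by lra.
    rewrite eb (QS P b ltac:(nlia R)); rewrite /=; lra.
- have Hb : (M%:Z * 1 + (a%:Z - b%:Z))%R = 1 by nlia R.
  have [-> ->] : a = 1%N /\ b = M by nlia R.
  rewrite Hb in e; move: e; rewrite /= => e.
  have [-> ->] : z = 0 /\ z' = 1 by lra.
  rewrite q1; lra.
Qed.

Definition gw {R : realType} {d : nat} (p : 'I_d -> nat -> R) (s : seq (digit d)) (i : 'I_d) : R -> R :=
  foldr (fun (w : digit d) f => fun t => p i (w i) * f t + qpos p i (w i)) id s.
Definition pn {d : nat} (N : 'I_d -> nat) (s : seq (digit d)) (i : 'I_d) : nat :=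
  foldl (fun acc (w : digit d) => N i * acc + w i)%N 0%N s.

Lemma psiw_coord {R : realType} {d : nat} (p : 'I_d -> nat -> R) s x i :
  psiw p s x ord0 i = gw p s i (x ord0 i).
Proof. by elim: s => [|w s IH] //=; rewrite /psi1 mxE IH. Qed.

Lemma gw_rcons {R : realType} {d : nat} (p : 'I_d -> nat -> R) s w i t :
  gw p (rcons s w) i t = gw p s i (p i (w i) * t + qpos p i (w i)).
Proof. by elim: s => [|v s IH] //=; rewrite IH. Qed.

Lemma pn_rcons {d : nat} (N : 'I_d -> nat) s w i : pn N (rcons s w) i = (N i * pn N s i + w i)%N.
Proof. by rewrite /pn foldl_rcons. Qed.

Lemma gw_strict {R : realType} {d : nat} (N : 'I_d -> nat) (p : 'I_d -> nat -> R) (s : seq (digit d)) (i : 'I_d) :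
  (forall i j, (1 <= j <= N i)%N -> 0 < p i j) ->
  (forall w, w \in s -> forall i, (1 <= w i <= N i)%N) ->
  forall t t' : R, t < t' -> gw p s i t < gw p s i t'.
Proof.
move=> hp; elim: s => [|w s IH] hs t t' tt' //=.
rewrite ltrD2r ltr_pM2l; last by apply: hp; apply: hs; rewrite inE eqxx.
by apply: IH => // v vs; apply: hs; rewrite inE vs orbT.
Qed.

Lemma key {R : realType} {d : nat} (N : 'I_d -> nat) (p : 'I_d -> nat -> R) (i : 'I_d) :
  (2 <= N i)%N ->
  (forall i j, (1 <= j <= N i)%N -> 0 < p i j) ->
  (forall i, \sum_(1 <= j < (N i).+1) p i j = 1) ->
  forall s s' : seq (digit d), size s = size s' ->
  (forall w, w \in s -> forall i, (1 <= w i <= N i)%N) ->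
  (forall w, w \in s' -> forall i, (1 <= w i <= N i)%N) ->
  (pn N s i = pn N s' i -> gw p s i =1 gw p s' i) /\
  (pn N s i = (pn N s' i).+1 -> gw p s i 0 = gw p s' i 1).
Proof.
move=> hN hp hs; elim/last_ind => [|s w IH] s'.
  case: s' => [|//] _ _ _; split => //.
have qM := QS (p i) (N i) ltac:(lia); rewrite /Qs hs in qM.
case/lastP: s' => [|s' w']; first by rewrite size_rcons.
rewrite !size_rcons => /eqP; rewrite eqSS => /eqP hsz hr hr'.
have rw : (1 <= w i <= N i)%N by apply: hr; rewrite mem_rcons inE eqxx.
have rw' : (1 <= w' i <= N i)%N by apply: hr'; rewrite mem_rcons inE eqxx.
have [IHa IHb] := IH s' hsz (fun v hv => hr v ltac:(by rewrite mem_rcons inE hv orbT))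
  (fun v hv => hr' v ltac:(by rewrite mem_rcons inE hv orbT)).
rewrite !pn_rcons; split.
- move=> /(natA _ _ _ _ _ rw rw') [e1 e2] t; rewrite !gw_rcons e2; exact: IHa.
- move=> /(natB _ _ _ _ _ rw rw') [[e1 e2]|[e1 [e2 e3]]].
  + rewrite !gw_rcons IHa // e2 mulr0 mulr1 add0r.
    rewrite /qpos -/(Qs (p i) _) -/(Qs (p i) _) QS; [by rewrite addrC|by case/andP: rw'].
  + rewrite !gw_rcons e2 e3 mulr0 mulr1 add0r.
    have -> : qpos p i 1 = 0 by rewrite /qpos big_geq.
    rewrite /qpos addrC -qM; exact: IHb.
Qed.

Lemma Kdec {R : realType} {d : nat} (p : 'I_d -> nat -> R) (D : seq (digit d)) (K : set 'rV[R]_d) :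
  K = \bigcup_(w in [set w | w \in D]) (psi1 p w @` K) ->
  forall y, K y -> exists w, w \in D /\ exists z, K z /\ y = psi1 p w z.
Proof. by move=> hK y; rewrite {1}hK => -[w /= wD [z Kz <-]]; exists w; split => //; exists z. Qed.

Lemma Kcl {R : realType} {d : nat} (p : 'I_d -> nat -> R) (D : seq (digit d)) (K : set 'rV[R]_d) :
  K = \bigcup_(w in [set w | w \in D]) (psi1 p w @` K) ->
  forall w z, w \in D -> K z -> K (psi1 p w z).
Proof. by move=> hK w z wD Kz; rewrite hK; exists w => //; exists z. Qed.

Lemma cube {R : realType} {d : nat} (N : 'I_d -> nat) (p : 'I_d -> nat -> R) (D : seq (digit d)) (K : set 'rV[R]_d) :
  (forall i, 2 <= N i)%N ->
  (forall i j, (1 <= j <= N i)%N -> 0 < p i j) ->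
  (forall i, \sum_(1 <= j < (N i).+1) p i j = 1) ->
  (forall w, w \in D -> forall i, (1 <= w i <= N i)%N) ->
  compact K -> K !=set0 ->
  K = \bigcup_(w in [set w | w \in D]) (psi1 p w @` K) ->
  forall y, K y -> forall i, 0 <= y ord0 i <= 1.
Proof.
move=> hN hp hs hD cpK K0 hK y Ky i.
have cf : {within K, continuous (fun y : 'rV[R]_d => y ord0 i)}.
  by apply: continuous_subspaceT; exact: coord_continuous.
have [c cK cmax] := EVT_max_rV K0 cpK cf.
have [c' cK' cmin] := EVT_min_rV K0 cpK cf.
rewrite inE in cK; rewrite inE in cK'.
have hpi : forall j, (1 <= j <= N i)%N -> 0 < p i j by move=> j; exact: hp.
have hsi : Qs (p i) (N i).+1 = 1 by exact: hs.
have [w [wD [z [Kz ec]]]] := Kdec _ _ _ hK _ cK; subst c.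
have [w' [wD' [z' [Kz' ec']]]] := Kdec _ _ _ hK _ cK'; subst c'.
have rw := hD w wD i; have rw' := hD w' wD' i.
move: (cmax y) (cmin y) (cmax z) (cmin z'); rewrite !inE /psi1 !mxE.
move=> /(_ Ky) h1 /(_ Ky) h2 /(_ Kz) h3 /(_ Kz') h4.
have P1 := hpi _ rw; have P2 := hpi _ rw'.
have Q1 := QPle1 hpi hsi _ rw; have Q2 := Qge0 hpi (w' i) ltac:(lia).
rewrite /qpos -/(Qs (p i) _) in h1 h2 h3 h4 *.
have L1 := Plt1 (hN i) hpi hsi _ rw.
have L2 := Plt1 (hN i) hpi hsi _ rw'.
set M := p i (w i) * z ord0 i + Qs (p i) (w i) in h1 h3.
set m := p i (w' i) * z' ord0 i + Qs (p i) (w' i) in h2 h4.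
have e3 : p i (w i) * z ord0 i <= p i (w i) * M by rewrite ler_pM2l.
have e4 : p i (w' i) * m <= p i (w' i) * z' ord0 i by rewrite ler_pM2l.
have M1 : M <= 1.
  have : (1 - p i (w i)) * (M - 1) <= 0 by rewrite /M in e3 *; lra.
  rewrite pmulr_rle0; lra.
have m0 : 0 <= m.
  have : 0 <= (1 - p i (w' i)) * m by rewrite /m in e4 *; lra.
  rewrite pmulr_rge0; lra.
lra.
Qed.

Lemma cont_sum {R : realType} {d : nat} (F : 'I_d -> 'rV[R]_d -> R) (r : seq 'I_d) :
  (forall i, continuous (F i)) -> continuous (fun y => \sum_(i <- r) F i y).
Proof.
move=> hF; elim: r => [|i r IH].
  under eq_fun do rewrite big_nil. exact: cst_continuous.
under eq_fun do rewrite big_cons.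
by move=> x; apply: continuousD; [exact: hF | exact: IH].
Qed.

Lemma cont_aff {R : realType} {d : nat} (a b : R) (i : 'I_d) :
  continuous (fun y : 'rV[R]_d => `|a * y ord0 i + b - y ord0 i|).
Proof.
move=> x.
apply: (@continuous_comp _ _ _ (fun y : 'rV[R]_d => a * y ord0 i + b - y ord0 i) (Num.norm : R -> R)); last exact: norm_continuous.
apply: continuousD; last by apply: continuousN; exact: coord_continuous.
apply: continuousD; last exact: cst_continuous.
apply: continuousM; first exact: cst_continuous.
exact: coord_continuous.
Qed.

Lemma fixpt {R : realType} {d : nat} (N : 'I_d -> nat) (p : 'I_d -> nat -> R) (D : seq (digit d)) (K : set 'rV[R]_d) :
  (forall i, 2 <= N i)%N ->
  (forall i j, (1 <= j <= N i)%N -> 0 < p i j) ->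
  (forall i, \sum_(1 <= j < (N i).+1) p i j = 1) ->
  (forall w, w \in D -> forall i, (1 <= w i <= N i)%N) ->
  compact K -> K !=set0 ->
  K = \bigcup_(w in [set w | w \in D]) (psi1 p w @` K) ->
  forall u, u \in D -> exists y, K y /\ forall i, y ord0 i = p i (u i) * y ord0 i + qpos p i (u i).
Proof.
move=> hN hp hs hD cpK K0 hK u uD.
pose h (y : 'rV[R]_d) := \sum_(i < d) `|p i (u i) * y ord0 i + qpos p i (u i) - y ord0 i|.
have cf : {within K, continuous h}.
  apply: continuous_subspaceT; apply: cont_sum => i; exact: cont_aff.
have [c cK cmin] := EVT_min_rV K0 cpK cf.
rewrite inE in cK.
have Kc' := Kcl _ _ _ hK _ _ uD cK.
have := cmin _ (mem_set Kc').
rewrite /h.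
set a := fun i => `|p i (u i) * c ord0 i + qpos p i (u i) - c ord0 i|.
have ea : forall i, `|p i (u i) * psi1 p u c ord0 i + qpos p i (u i) - psi1 p u c ord0 i| = p i (u i) * a i.
  move=> i; rewrite /a /psi1 !mxE.
  have -> : p i (u i) * (p i (u i) * c ord0 i + qpos p i (u i)) + qpos p i (u i) -
     (p i (u i) * c ord0 i + qpos p i (u i)) = p i (u i) * (p i (u i) * c ord0 i + qpos p i (u i) - c ord0 i) by ring.
  rewrite normrM ger0_norm //; apply/ltW/hp/hD => //.
under [X in _ <= X]eq_bigr do rewrite ea.
rewrite -subr_ge0 -sumrB => hsum.
have pl1 : forall i, p i (u i) < 1.
  move=> i; apply: (Plt1 (hN i) (fun j => hp i j) (hs i)); exact: hD.
have pg0 : forall i, 0 < p i (u i) by move=> i; apply/hp/hD.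
have ge : forall i : 'I_d, true -> 0 <= a i - p i (u i) * a i.
  move=> i _; have a0 : 0 <= a i by rewrite /a normr_ge0.
  have := pl1 i; have : p i (u i) * a i <= a i by rewrite ler_piMl // ltW.
  lra.
have S0 : \sum_(i < d) (a i - p i (u i) * a i) = 0.
  apply/eqP; rewrite eq_le sumr_ge0 ?andbT //.
  have -> : \sum_(i < d) (a i - p i (u i) * a i) = - \sum_(i < d) (p i (u i) * a i - a i).
    by rewrite -sumrN; apply: eq_bigr => i _; rewrite opprB.
  by rewrite oppr_le0.
have hz := psumr_eq0P ge S0.
exists c; split => // i.
have : (1 - p i (u i)) * a i = 0 by rewrite mulrBl mul1r; exact: hz.
move/eqP; rewrite mulf_eq0 => /orP[/eqP|/eqP]; first by have := pl1 i; lra.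
rewrite /a => /eqP; rewrite normr_eq0 subr_eq0 => /eqP ->.
by [].
Qed.

Definition Gp {R : realType} {d : nat} (K : set 'rV[R]_d) (al : 'I_d -> int) : Prop :=
  exists y y', K y /\ K y' /\ forall i, y' ord0 i = y ord0 i + (al i)%:~R.

Lemma fixc {R : realType} (P Q x t : R) : P < 1 -> x = P * x + Q -> Q = t * (1 - P) -> x = t.
Proof.
move=> hP ex eQ.
have : (1 - P) * (x - t) = (x - (P * x + Q)) + (Q - t * (1 - P)) by ring.
rewrite -ex eQ !subrr addr0.
move/eqP; rewrite mulf_eq0 => /orP[/eqP|/eqP]; lra.
Qed.

Lemma Ecum_zpm1 {d : nat} (N : 'I_d -> nat) (D : seq (digit d)) k al :
  Ecum N D k al -> zpm1 al.
Proof. by elim: k al => [|k IH] al /= => [[]|[/IH|[]]]. Qed.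

Lemma Eset_zpm1 {d : nat} (N : 'I_d -> nat) (D : seq (digit d)) k al :
  Eset N D k al -> zpm1 al.
Proof. by case: k => [[]|k []]. Qed.

Lemma Eset_Ecum {d : nat} (N : 'I_d -> nat) (D : seq (digit d)) k al :
  Eset N D k al -> Ecum N D k al.
Proof. by case: k => [|k] //= h; right. Qed.

Lemma Ecum_mono {d : nat} (N : 'I_d -> nat) (D : seq (digit d)) k k' al :
  (k <= k')%N -> Ecum N D k al -> Ecum N D k' al.
Proof.
move=> kk'; elim: k' kk' => [|k' IH]; first by rewrite leqn0 => /eqP ->.
rewrite leq_eqVlt => /orP[/eqP -> //|] /= hk h; left; exact: IH.
Qed.

Lemma E0_Ecum {d : nat} (N : 'I_d -> nat) (D : seq (digit d)) k al :
  E0 N D al -> Ecum N D k al.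
Proof. by move=> h; apply: (@Ecum_mono _ N D 0). Qed.

Lemma E0_G {R : realType} {d : nat} (N : 'I_d -> nat) (p : 'I_d -> nat -> R) (D : seq (digit d)) (K : set 'rV[R]_d) :
  (forall i, 2 <= N i)%N ->
  (forall i j, (1 <= j <= N i)%N -> 0 < p i j) ->
  (forall i, \sum_(1 <= j < (N i).+1) p i j = 1) ->
  (forall w, w \in D -> forall i, (1 <= w i <= N i)%N) ->
  compact K -> K !=set0 ->
  K = \bigcup_(w in [set w | w \in D]) (psi1 p w @` K) ->
  forall al, E0 N D al -> Gp K al.
Proof.
move=> hN hp hs hD cpK K0 hK al [zal [nz [u [v [uD [vD huv]]]]]].
have [y' [Ky' fy']] := fixpt N p D K hN hp hs hD cpK K0 hK u uD.
have [y [Ky fy]] := fixpt N p D K hN hp hs hD cpK K0 hK v vD.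
exists y, y'; split; [|split] => // i.
have ru := hD u uD i; have rv := hD v vD i.
have hpi : forall j, (1 <= j <= N i)%N -> 0 < p i j by move=> j; exact: hp.
have hsi : Qs (p i) (N i).+1 = 1 by exact: hs.
have pu := Plt1 (hN i) hpi hsi _ ru; have pv := Plt1 (hN i) hpi hsi _ rv.
have qM := QS (p i) (N i) ltac:(nlia R); rewrite hsi in qM.
have q1 := Q1 (p i).
have fyi := fy i; have fy'i := fy' i.
rewrite /qpos -/(Qs (p i) _) in fyi fy'i.
have hi := huv i.
case: (int3 _ (zal i)) => [|[]] Hal; rewrite Hal in hi *.
- have [eu ev] : u i = 1%N /\ v i = N i by nlia R.
  rewrite eu in fy'i pu; rewrite ev in fyi pv.
  have e1 : Qs (p i) 1 = 0 * (1 - p i 1) by rewrite q1 mul0r.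
  have e2 : Qs (p i) (N i) = 1 * (1 - p i (N i)) by rewrite mul1r; lra.
  have -> := fixc _ _ _ 0 pu fy'i e1.
  have -> := fixc _ _ _ 1 pv fyi e2.
  rewrite /=; lra.
- have eu : u i = v i by nlia R.
  rewrite eu in fy'i pu.
  have Q0 : Qs (p i) (v i) = (Qs (p i) (v i) / (1 - p i (v i))) * (1 - p i (v i)).
    by rewrite divfK // subr_eq0; apply/eqP => h; move: pv; rewrite -h ltxx.
  rewrite (fixc _ _ _ _ pu fy'i Q0) (fixc _ _ _ _ pv fyi Q0) /=; lra.
- have [eu ev] : u i = N i /\ v i = 1%N by nlia R.
  rewrite ev in fyi pv; rewrite eu in fy'i pu.
  have e1 : Qs (p i) 1 = 0 * (1 - p i 1) by rewrite q1 mul0r.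
  have e2 : Qs (p i) (N i) = 1 * (1 - p i (N i)) by rewrite mul1r; lra.
  have -> := fixc _ _ _ 0 pv fyi e1.
  have -> := fixc _ _ _ 1 pu fy'i e2.
  rewrite /=; lra.
Qed.

Lemma step_G {R : realType} {d : nat} (N : 'I_d -> nat) (p : 'I_d -> nat -> R) (D : seq (digit d)) (K : set 'rV[R]_d) :
  (forall i, 2 <= N i)%N ->
  (forall i j, (1 <= j <= N i)%N -> 0 < p i j) ->
  (forall i, \sum_(1 <= j < (N i).+1) p i j = 1) ->
  (forall w, w \in D -> forall i, (1 <= w i <= N i)%N) ->
  compact K -> K !=set0 ->
  K = \bigcup_(w in [set w | w \in D]) (psi1 p w @` K) ->
  forall (U : ('I_d -> int) -> Prop) al, (forall b, U b -> Gp K b /\ zpm1 b) ->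
  Estep N D U al -> Gp K al.
Proof.
move=> hN hp hs hD cpK K0 hK U al hU [zal [nz [e [[u [v [uD [vD he]]]] hUe]]]].
have [[z [z' [Kz [Kz' hz]]]] zb] := hU _ hUe.
exists (psi1 p u z), (psi1 p v z'); split; first exact: Kcl _ _ _ hK _ _ uD Kz.
split; first exact: Kcl _ _ _ hK _ _ vD Kz'.
move=> i; rewrite /psi1 !mxE.
have hpi : forall j, (1 <= j <= N i)%N -> 0 < p i j by move=> j; exact: hp.
have hsi : Qs (p i) (N i).+1 = 1 by exact: hs.
have cz := cube N p D K hN hp hs hD cpK K0 hK _ Kz i.
have cz' := cube N p D K hN hp hs hD cpK K0 hK _ Kz' i.
have zbi := zb i; have hzi := hz i; rewrite /= he in zbi hzi.
exact: (coord_bwd (hN i) hpi hsi _ _ _ _ _ (hD u uD i) (hD v vD i) cz cz' (zal i) zbi hzi).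
Qed.

Lemma Ecum_G {R : realType} {d : nat} (N : 'I_d -> nat) (p : 'I_d -> nat -> R) (D : seq (digit d)) (K : set 'rV[R]_d) :
  (forall i, 2 <= N i)%N ->
  (forall i j, (1 <= j <= N i)%N -> 0 < p i j) ->
  (forall i, \sum_(1 <= j < (N i).+1) p i j = 1) ->
  (forall w, w \in D -> forall i, (1 <= w i <= N i)%N) ->
  compact K -> K !=set0 ->
  K = \bigcup_(w in [set w | w \in D]) (psi1 p w @` K) ->
  forall k al, Ecum N D k al -> Gp K al.
Proof.
move=> hN hp hs hD cpK K0 hK; elim => [|k IH] al /=.
  exact: E0_G N p D K hN hp hs hD cpK K0 hK al.
case; first exact: IH.
apply: (step_G N p D K hN hp hs hD cpK K0 hK) => b hb; split; first exact: IH.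
exact: Ecum_zpm1 hb.
Qed.

Lemma Eset_G {R : realType} {d : nat} (N : 'I_d -> nat) (p : 'I_d -> nat -> R) (D : seq (digit d)) (K : set 'rV[R]_d) :
  (forall i, 2 <= N i)%N ->
  (forall i j, (1 <= j <= N i)%N -> 0 < p i j) ->
  (forall i, \sum_(1 <= j < (N i).+1) p i j = 1) ->
  (forall w, w \in D -> forall i, (1 <= w i <= N i)%N) ->
  compact K -> K !=set0 ->
  K = \bigcup_(w in [set w | w \in D]) (psi1 p w @` K) ->
  forall k al, Eset N D k al -> Gp K al.
Proof.
move=> hN hp hs hD cpK K0 hK k al /Eset_Ecum; exact: Ecum_G N p D K hN hp hs hD cpK K0 hK k al.
Qed.

Lemma absv_le {d : nat} (b : 'I_d -> int) : zpm1 b -> (absv b <= d)%N.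
Proof.
move=> zb; rewrite /absv -[X in (_ <= X)%N]card_ord -sum1_card.
by apply: leq_sum => i _; have := zb i; lia.
Qed.

Lemma absv_lt {d : nat} (a b : 'I_d -> int) (i : 'I_d) :
  (forall j, absz (a j) <= absz (b j))%N -> (absz (a i) < absz (b i))%N -> (absv a < absv b)%N.
Proof.
move=> hle hlt; rewrite /absv (bigD1 i) //= [X in (_ < X)%N](bigD1 i) //=.
have : (\sum_(j < d | j != i) absz (a j) <= \sum_(j < d | j != i) absz (b j))%N.
  by apply: leq_sum => j _; exact: hle.
by move=> h; rewrite -addSn; apply: leq_add.
Qed.

Lemma E0_Eset {d : nat} (N : 'I_d -> nat) (D : seq (digit d)) k al :
  E0 N D al -> Eset N D k al.
Proof.
case: k => [//|k] h; have h' := h; case: h' => [zal [nz [u [v [uD [vD huv]]]]]].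
split => //; split => //; exists (fun i => (v i)%:Z - (u i)%:Z); split.
  by exists v, u.
have -> : (fun i => (N i)%:Z * al i + ((v i)%:Z - (u i)%:Z)) = al.
  apply: funext => i; have := huv i; rewrite mulrBl mul1r; lia.
exact: E0_Ecum.
Qed.

Lemma G_step {R : realType} {d : nat} (N : 'I_d -> nat) (p : 'I_d -> nat -> R) (D : seq (digit d)) (K : set 'rV[R]_d) :
  (forall i, 2 <= N i)%N ->
  (forall i j, (1 <= j <= N i)%N -> 0 < p i j) ->
  (forall i, \sum_(1 <= j < (N i).+1) p i j = 1) ->
  (forall w, w \in D -> forall i, (1 <= w i <= N i)%N) ->
  compact K -> K !=set0 ->
  K = \bigcup_(w in [set w | w \in D]) (psi1 p w @` K) ->
  forall al, zpm1 al -> Gp K al ->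
  exists u v (be : 'I_d -> int), u \in D /\ v \in D /\
    be = (fun i => (N i)%:Z * al i + ((u i)%:Z - (v i)%:Z)) /\
    Gp K be /\ zpm1 be /\ forall i, al i != 0 -> be i = al i.
Proof.
move=> hN hp hs hD cpK K0 hK al zal [y [y' [Ky [Ky' hy]]]].
have [u [uD [z [Kz ey]]]] := Kdec _ _ _ hK _ Ky.
have [v [vD [z' [Kz' ey']]]] := Kdec _ _ _ hK _ Ky'.
pose be := (fun i => (N i)%:Z * al i + ((u i)%:Z - (v i)%:Z)).
exists u, v, be; split => //; split => //; split => //.
have H : forall i, z' ord0 i = z ord0 i + (be i)%:~R /\ `|be i| <= 1 /\ (al i != 0 -> be i = al i).
  move=> i.
  have hpi : forall j, (1 <= j <= N i)%N -> 0 < p i j by move=> j; exact: hp.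
  have hsi : Qs (p i) (N i).+1 = 1 by exact: hs.
  have cz := cube N p D K hN hp hs hD cpK K0 hK _ Kz i.
  have cz' := cube N p D K hN hp hs hD cpK K0 hK _ Kz' i.
  have e := hy i; rewrite ey ey' /psi1 !mxE in e.
  exact: (coord_fwd (hN i) hpi hsi _ _ _ _ _ (hD u uD i) (hD v vD i) cz cz' (zal i) e).
split; first by exists z, z'; split => //; split => // i; case: (H i).
split; first by move=> i; case: (H i) => _ [].
by move=> i; case: (H i) => _ [].
Qed.

Lemma G_Eset {R : realType} {d : nat} (N : 'I_d -> nat) (p : 'I_d -> nat -> R) (D : seq (digit d)) (K : set 'rV[R]_d) :
  (forall i, 2 <= N i)%N ->
  (forall i j, (1 <= j <= N i)%N -> 0 < p i j) ->
  (forall i, \sum_(1 <= j < (N i).+1) p i j = 1) ->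
  (forall w, w \in D -> forall i, (1 <= w i <= N i)%N) ->
  compact K -> K !=set0 ->
  K = \bigcup_(w in [set w | w \in D]) (psi1 p w @` K) ->
  forall m al, zpm1 al -> nonzerov al -> (d - absv al)%N = m -> Gp K al -> Eset N D m al.
Proof.
move=> hN hp hs hD cpK K0 hK; elim/ltn_ind => m IH al zal nz hm G.
have [u [v [be [uD [vD [eb [Gb [zb hb]]]]]]]] := G_step N p D K hN hp hs hD cpK K0 hK al zal G.
have [allE|notE] := boolP [forall i, be i == al i].
  apply: E0_Eset; split => //; split => //; exists v, u; split => //; split => // i.
  have := eqP (forallP allE i); rewrite eb mulrBl mul1r; lia.
have [i hi] : exists i, be i != al i.
  by move/forallPn: notE => [i hi]; exists i.
have ai0 : al i = 0.
  by apply/eqP; apply: contraT => h; move: hi; rewrite hb // eqxx.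
have le1 : forall j, (absz (al j) <= absz (be j))%N.
  move=> j; have [->|/hb ->] := eqVneq (al j) 0 => //.
have lt1 : (absz (al i) < absz (be i))%N.
  rewrite ai0 /= absz_gt0; by rewrite ai0 in hi.
have lt := absv_lt _ _ _ le1 lt1.
have lb := absv_le _ zb.
case: m IH hm => [|m] IH hm; first by lia.
have hE := IH (d - absv be)%N ltac:(lia) be zb _ erefl Gb.
split => //; split => //; exists (fun i => (u i)%:Z - (v i)%:Z); split; first by exists u, v.
rewrite -eb; apply: (@Ecum_mono _ N D (d - absv be)%N); first by lia.
apply: Eset_Ecum; apply: hE.
have [j hj] := nz; exists j; by rewrite hb.
Qed.

Lemma pinch {R : realType} (f g : R -> R) y y' :
  (forall t t', t < t' -> f t < f t') -> (forall t t', t < t' -> g t < g t') ->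
  f y = g y' -> f 0 = g 1 -> 0 <= y <= 1 -> 0 <= y' <= 1 -> y = 0 /\ y' = 1.
Proof.
move=> hf hg e e01 hy hy'.
have gle : g y' <= g 1.
  have [->|lt] := eqVneq y' 1; first by [].
  by apply/ltW/hg; rewrite lt_neqAle lt; case/andP: hy'.
have fle : f 0 <= f y.
  have [<-|lt] := eqVneq 0 y; first by [].
  by apply/ltW/hf; rewrite lt_neqAle lt; case/andP: hy.
split.
  apply/eqP; apply: contraT => hy0.
  have := hf 0 y ltac:(by rewrite lt_neqAle eq_sym hy0; case/andP: hy). lra.
apply/eqP; apply: contraT => hy0.
have := hg y' 1 ltac:(by rewrite lt_neqAle hy0; case/andP: hy'). lra.
Qed.

Lemma inj_strict {R : realType} (f : R -> R) y y' :
  (forall t t', t < t' -> f t < f t') -> f y = f y' -> y = y'.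
Proof.
move=> hf e; have [lt|gt|//] := ltgtP y y'.
- by have := hf _ _ lt; rewrite e ltxx.
- by have := hf _ _ gt; rewrite e ltxx.
Qed.

Theorem mainTheorem20 (R : realType) (d : nat) (N : 'I_d -> nat)
  (p : 'I_d -> nat -> R) (D : seq (digit d)) (K : set 'rV[R]_d)
  (s s' : seq (digit d)) :
  (2 <= d)%N ->
  (forall i, 2 <= N i)%N ->
  (forall i j, (1 <= j <= N i)%N -> 0 < p i j) ->
  (forall i, \sum_(1 <= j < (N i).+1) p i j = 1) ->
  uniq D ->
  (forall w, w \in D -> forall i, (1 <= w i <= N i)%N) ->
  (1 < size D)%N -> (size D < \prod_(i < d) N i)%N ->
  compact K -> K !=set0 ->
  K = \bigcup_(w in [set w | w \in D]) (psi1 p w @` K) ->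
  s != [::] -> all (mem D) s -> all (mem D) s' -> size s = size s' ->
  let a := fun i => piw N s i - piw N s' i in
  zpm1 a -> nonzerov a ->
  ((psiw p s @` K) `&` (psiw p s' @` K) !=set0 <-> Eset N D (d - absv a) a).
Proof.
move=> hd hN hp hs uD hD h1 h2 cpK K0 hK sn sD s'D hsz a za nza.
have rs : forall w, w \in s -> forall i, (1 <= w i <= N i)%N.
  by move=> w ws; apply: hD; exact: (allP sD).
have rs' : forall w, w \in s' -> forall i, (1 <= w i <= N i)%N.
  by move=> w ws; apply: hD; exact: (allP s'D).
have st := gw_strict N p s _ hp rs.
have st' := gw_strict N p s' _ hp rs'.
have cb := cube N p D K hN hp hs hD cpK K0 hK.
have ai : forall i, a i = (pn N s i)%:Z - (pn N s' i)%:Z by [].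
suff -> : (psiw p s @` K) `&` (psiw p s' @` K) !=set0 <-> Gp K a.
  split; first exact: (G_Eset N p D K hN hp hs hD cpK K0 hK _ a za nza erefl).
  exact: (Eset_G N p D K hN hp hs hD cpK K0 hK).
have kk := fun i => key N p i (hN i) hp hs s s' hsz rs rs'.
have kk' := fun i => key N p i (hN i) hp hs s' s (esym hsz) rs' rs.
split.
- move=> [x [[y Ky ey] [y' Ky' ey']]]; exists y, y'; split => //; split => // i.
  have e : gw p s i (y ord0 i) = gw p s' i (y' ord0 i).
    by rewrite -!psiw_coord ey ey'.
  have [ka kb] := kk i; have [ka' kb'] := kk' i.
  have hai := ai i.
  case: (int3_ _ (za i)) => [|[]] Hal; rewrite Hal in hai *.
  + have [-> ->] := pinch _ _ _ _ (st' i) (st i) (esym e) (kb' ltac:(nlia R)) (cb _ Ky' i) (cb _ Ky i).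
    by rewrite /=; lra.
  + rewrite (inj_strict _ _ _ (st i) (etrans e (esym (ka ltac:(nlia R) _)))).
    by rewrite /=; lra.
  + have [-> ->] := pinch _ _ _ _ (st i) (st' i) e (kb ltac:(nlia R)) (cb _ Ky i) (cb _ Ky' i).
    by rewrite /=; lra.
- move=> [y [y' [Ky [Ky' hy]]]]; exists (psiw p s y); split; first by exists y.
  exists y' => //; apply/matrixP => r j; rewrite [r]ord1 !psiw_coord.
  have [ka kb] := kk j; have [ka' kb'] := kk' j.
  have hai := ai j; have hyj := hy j.
  have cy := cb _ Ky j; have cy' := cb _ Ky' j.
  case: (int3_ _ (za j)) => [|[]] Hal; rewrite Hal in hai hyj.
  + have [-> ->] : y ord0 j = 1 /\ y' ord0 j = 0 by move: hyj; rewrite /=; lra.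
    by rewrite kb' //; nlia R.
  + rewrite hyj /= addr0; symmetry; apply: ka; nlia R.
  + have [-> ->] : y ord0 j = 0 /\ y' ord0 j = 1 by move: hyj; rewrite /=; lra.
    by rewrite kb //; nlia R.
Qed.
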